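(* Let $s\in(0,1]$, $r=1-s$, and let $\{a_n\}_{n\in\mathbb Z}$ be i.i.d. geometric random variables on $\{1,2,\dots\}$ with $\mathbb P[a_0>i]=r^i$ for $i\ge 0$. Let $N_n=\#\{m\in\mathbb Z: m<n,\ m+a_m>n\}+1$ (the stationary population process), and let $G(z)=\mathbb E[z^{N_0}]$, $z\in[0,1]$, be the probability generating function of $N_0$. Then $$G(z)=z\,G(rz+s)\qquad\text{for all } z\in[0,1].$$ *)

(* Defs.v *)
From HB Require Import structures.
From mathcomp Require Import all_boot all_order all_algebra finmap.
From mathcomp Require Import all_classical all_reals all_analysis.
Set Implicit Arguments. Unset Strict Implicit. Unset Printing Implicit Defensive.
Import Order.TTheory GRing.Theory Num.Theory.
Local Open Scope classical_set_scope.
Local Open Scope ring_scope.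

Definition rv_family d (T : measurableType d) (a : int -> T -> nat) :=
  forall n, measurable_fun setT (a n).

Definition mutually_independent d (T : measurableType d) (R : realType)
  (P : probability T R) (a : int -> T -> nat) :=
  forall (F : {fset int}) (B : int -> set nat),
    P (\bigcap_(n in [set` F]) (a n @^-1` B n)) =
    (\prod_(n <- F) P (a n @^-1` B n))%E.

Definition geometric_tails d (T : measurableType d) (R : realType)
  (P : probability T R) (r : R) (a : int -> T -> nat) :=
  forall (n : int) (i : nat), P [set w | (i < a n w)%N] = (r ^+ i)%:E.

(* N_0 = #{m in Z : m < 0, m + a_m > 0} + 1  (the set is a.s. finite;
   fset_set returns the empty set on the null event where it is infinite) *)
Definition N0 d (T : measurableType d) (a : int -> T -> nat) (w : T) : nat :=
  (#|` fset_set [set m : int | m < 0 /\ 0 < m + (a m w)%:Z] |).+1.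

Definition pgf_N0 d (T : measurableType d) (R : realType)
  (P : probability T R) (a : int -> T -> nat) (z : R) : \bar R :=
  (\int[P]_w ((z ^+ N0 a w)%:E))%E.

(* Main.v *)
Require Import Defs.
From HB Require Import structures.
From mathcomp Require Import all_boot all_order all_algebra finmap.
From mathcomp Require Import all_classical all_reals all_analysis.
From mathcomp Require Import measurable_realfun zify ring lra.
Import Order.TTheory GRing.Theory Num.Theory numFieldNormedType.Exports.
Local Open Scope classical_set_scope.
Local Open Scope ring_scope.

Section Pf.
Variables (R : realType) (d : measure_display) (T : measurableType d)
  (P : probability T R) (a : int -> T -> nat).
Hypothesis amf : rv_family a.

Definition Ev (m : int) : set T := [set w | 0 < m + (a m w)%:Z].

Lemma Ev_meas m : measurable (Ev m).
Proof.
have := amf m measurableT; move=> /(_ [set i : nat | 0 < m + i%:Z]) H.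
by rewrite -[Ev m]setTI; apply: H.
Qed.

Definition em (K : nat) : int := - (K.+1)%:Z.

Fixpoint Nk (K : nat) (w : T) : nat :=
  match K with
  | 0 => 1%N
  | K'.+1 => if 0 < em K' + (a (em K') w)%:Z then (Nk K' w).+1 else Nk K' w
  end.

Lemma Nk_meas K : forall B : set nat, measurable (Nk K @^-1` B).
Proof.
elim: K => [|K IH] B /=.
  case: (pselect (B 1%N)) => h.
    by have -> : (fun _ : T => 1%N) @^-1` B = setT by apply/seteqP; split.
  by have -> : (fun _ : T => 1%N) @^-1` B = set0 by apply/seteqP; split.
have -> : (fun w => if 0 < em K + (a (em K) w)%:Z then (Nk K w).+1 else Nk K w) @^-1` B
   = (Ev (em K) `&` Nk K @^-1` [set n | B n.+1]) `|` (~` Ev (em K) `&` Nk K @^-1` B).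
  apply/seteqP; split => w /=; rewrite /Ev /=.
    by case: ifP => h hB; [left|right; split=> //; rewrite h].
  case=> -[h1 h2]; first by rewrite h1.
  by case: ifP => // h3; exfalso; exact: h1.
apply: measurableU; apply: measurableI; rewrite ?IH //.
  exact: Ev_meas.
by apply: measurableC; exact: Ev_meas.
Qed.

Lemma Nk_mf K : measurable_fun setT (Nk K).
Proof. by move=> _ B _; rewrite setTI; exact: Nk_meas. Qed.

Lemma nat_mf (f : nat -> \bar R) : measurable_fun (setT : set nat) f.
Proof. by move=> _ B _. Qed.

Lemma powNk_mf (y : R) K : measurable_fun setT (fun w => (y ^+ Nk K w)%:E).
Proof. exact: (measurableT_comp (nat_mf (fun n => (y ^+ n)%:E)) (Nk_mf K)). Qed.


Lemma nat_mfR (f : nat -> R) : measurable_fun (setT : set nat) f.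
Proof. by move=> _ B _. Qed.

Lemma powNkR_mf (y : R) K : measurable_fun setT (fun w => (y ^+ Nk K w)).
Proof. exact: (measurableT_comp (nat_mfR (fun n => (y ^+ n))) (Nk_mf K)). Qed.

Definition EF (F : {fset int}) : set T := \bigcap_(n in [set` F]) Ev n.

Lemma EF_meas F : measurable (EF F).
Proof. apply: fin_bigcap_measurable; first exact: finite_fset. by move=> i _; exact: Ev_meas. Qed.

Lemma EF0 : EF fset0 = setT.
Proof. by apply/seteqP; split => // w _ n /=; rewrite inE. Qed.

Lemma EFU1 m F : EF (m |` F)%fset = Ev m `&` EF F.
Proof.
apply/seteqP; split => w /=.
  move=> h; split; first by apply: h; rewrite /= in_fset1U eqxx.
  by move=> n /= nF; apply: h; rewrite /= in_fset1U nF orbT.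
move=> [h1 h2] n /=; rewrite in_fset1U => /orP[/eqP -> //|nF].
exact: h2.
Qed.

Lemma P_EFU1 : mutually_independent P a -> forall m F, m \notin F ->
  P (EF (m |` F)%fset) = (P (Ev m) * P (EF F))%E.
Proof.
move=> ind m F mF.
pose B := fun n : int => [set i : nat | 0 < n + i%:Z].
transitivity (\prod_(n <- (m |` F)%fset) P (a n @^-1` B n))%E; first exact: ind.
rewrite big_fsetU1 //; congr (_ * _)%E; symmetry; exact: ind.
Qed.

Lemma Ev_em K : Ev (em K) = [set w | (K.+1 < a (em K) w)%N].
Proof. by apply/seteqP; split => w; rewrite /Ev /em /= => h; lia. Qed.


Definition Qp (z r : R) (K : nat) : R := z * \prod_(i < K) (1 - (1 - z) * r ^+ i.+1).
Definition fK (z : R) K F w : \bar R := (z ^+ Nk K w * \1_(EF F) w)%:E.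

Lemma fK_mf z K F : measurable_fun setT (fK z K F).
Proof.
apply/(measurable_EFinP _ (fun w => z ^+ Nk K w * \1_(EF F) w)).
apply: measurable_funM; first exact: powNkR_mf.
exact: measurable_indic (EF_meas F).
Qed.

Lemma fK_ge0 z K F w : 0 <= z -> (0 <= fK z K F w)%E.
Proof.
move=> hz; rewrite /fK lee_fin; apply: mulr_ge0; first exact: exprn_ge0.
by rewrite indicE; case: (w \in _).
Qed.

Lemma indic_Ev K w : (\1_(Ev (em K)) w : R) =
  if 0 < em K + (a (em K) w)%:Z then 1 else 0.
Proof.
rewrite indicE; case: ifP => h.
  by rewrite mem_set.
by rewrite memNset // /Ev /= h.
Qed.

Lemma fK_rec z K F w : 
  fK z K F w = (fK z K.+1 F w + (1 - z)%:E * fK z K (em K |` F)%fset w)%E.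
Proof.
rewrite /fK -EFinM -EFinD; congr EFin.
rewrite EFU1 indicI; rewrite /= -/(em K) indic_Ev /=.
case: ifP => _; rewrite ?exprS; ring.
Qed.


Lemma Pfin A : measurable A -> P A = (fine (P A))%:E.
Proof. by move=> mA; rewrite fineK // fin_num_measure. Qed.

Lemma integral_fK (r z : R) : mutually_independent P a -> geometric_tails P r a ->
  0 <= z <= 1 -> forall K (F : {fset int}), (forall n, n \in F -> n < - (K%:Z)) ->
  (\int[P]_w fK z K F w = (Qp z r K)%:E * P (EF F))%E.
Proof.
move=> ind geo /andP[z0 z1]; elim => [|K IH] F HF.
  under eq_integral => w _ do rewrite /fK /= expr1 EFinM.
  have mI : measurable_fun setT (fun w => (\1_(EF F) w : R)%:E).
    apply/(measurable_EFinP _ (fun w => \1_(EF F) w)).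
    exact: measurable_indic (EF_meas F).
  have I0 : forall w, setT w -> (0 <= (\1_(EF F) w : R)%:E)%E.
    by move=> w _; rewrite lee_fin indicE; case: (w \in _).
  rewrite (ge0_integralZl_EFin _ _ I0 mI z0) //.
  rewrite integral_indic //; last exact: EF_meas.
  rewrite /Qp big_ord0 mulr1; congr (_ * P _)%E.
  by apply/seteqP; split=> [x []|x] //.
have HF1 : forall n, n \in F -> n < - (K%:Z) by move=> n /HF; rewrite -/(em K) /em; lia.
have HF2 : forall n, n \in (em K |` F)%fset -> n < - (K%:Z).
  by move=> n; rewrite in_fset1U => /orP[/eqP ->|/HF1//]; rewrite /em; lia.
have nF : em K \notin F.
  by apply/negP => /HF; rewrite /em; lia.
have := IH F HF1.
under eq_integral => w _ do rewrite fK_rec.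
rewrite ge0_integralD //; last 4 first.
- by move=> w _; apply: fK_ge0.
- exact: fK_mf.
- by move=> w _; apply: mule_ge0; [rewrite lee_fin subr_ge0 | apply: fK_ge0].
- by apply: emeasurable_funM; [exact: measurable_cst | exact: fK_mf].
rewrite ge0_integralZl_EFin //; last 3 first.
- by move=> w _; apply: fK_ge0.
- exact: fK_mf.
- by rewrite subr_ge0.
rewrite IH // P_EFU1 // Ev_em geo (Pfin _ (EF_meas F)) => H.
have -> : (\int[P]_w fK z K.+1 F w = \int[P]_w fK z K.+1 F w +
   (1 - z)%:E * ((Qp z r K)%:E * ((r ^+ K.+1)%:E * (fine (P (EF F)))%:E)) -
   (1 - z)%:E * ((Qp z r K)%:E * ((r ^+ K.+1)%:E * (fine (P (EF F)))%:E)))%E.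
  by rewrite addeK // -!EFinM.
rewrite H -!EFinM -EFinB; congr EFin.
rewrite /Qp big_ord_recr /=; ring.
Qed.


Definition Sw w := [set m : int | m < 0 /\ 0 < m + (a m w)%:Z].
Definition SK K w := [set m : int | - (K%:Z) <= m /\ m < 0 /\ 0 < m + (a m w)%:Z].
Definition Dk K := \bigcup_j Ev (em (K + j)).

Lemma N0E w : N0 a w = (#|` fset_set (Sw w)|).+1.
Proof. by []. Qed.

Lemma SK_card K w : finite_set (SK K w) /\ Nk K w = (#|` fset_set (SK K w)|).+1.
Proof.
elim: K => [|K [fin IH]].
  have -> : SK 0 w = set0 by apply/seteqP; split => m //= [h1 [h2 _]]; lia.
  by rewrite fset_set0 cardfs0; split => //; exact: finite_set0.
have E : SK K.+1 w = if 0 < em K + (a (em K) w)%:Z then em K |` SK K w else SK K w.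
  apply/seteqP; split => m /=.
    move=> [h1 [h2 h3]].
    have [me|ne] := eqVneq m (em K).
      by rewrite -me h3; left.
    have h4 : - (K%:Z) <= m by move: ne h1; rewrite /em; lia.
    by case: ifP => _; [right|]; split.
  case: ifP => hc.
    case => [->|[h1 [h2 h3]]]; last by split => //; lia.
    by split; [rewrite /em; lia| split; [rewrite /em; lia|]].
  by case => [h1 [h2 h3]]; split => //; lia.
rewrite E /=; case: ifP => hc //.
have nin : em K \notin fset_set (SK K w).
  rewrite in_fset_set //; apply/negP; rewrite inE /=; case; rewrite /em; lia.
split; first by rewrite finite_setU; split => //; exact: finite_set1.
by rewrite fset_setU1 // cardfsU1 nin IH.
Qed.

Lemma notDk_S K w : ~ Dk K w -> Sw w = SK K w.
Proof.
move=> nD; apply/seteqP; split => m /=; last by case=> _ [].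
move=> [h1 h2]; split => //.
rewrite leNgt; apply/negP => h3; apply: nD.
exists (`|m|%N - K.+1)%N => //.
have -> : em (K + (`|m|%N - K.+1)) = m by rewrite /em; lia.
exact: h2.
Qed.

Lemma notDk_N0 K w : ~ Dk K w -> N0 a w = Nk K w.
Proof.
by move=> nD; rewrite N0E (notDk_S _ _ nD) (proj2 (SK_card K w)).
Qed.

Lemma allDk_N0 w : (forall K, Dk K w) -> N0 a w = 1%N.
Proof.
move=> hD; rewrite N0E /fset_set; case: pselect => // fin; exfalso.
set F := fset_set (Sw w).
pose K := (\max_(m <- F) `|m|%N)%N.
have [j _ hj] := hD K.
have inS : em (K + j) \in F.
  rewrite in_fset_set // inE; split => //; rewrite /em; lia.
have : (`|em (K + j)| <= K)%N by rewrite /K; apply: leq_bigmax_seq.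
rewrite -/K /em; lia.
Qed.


Lemma Dk_meas K : measurable (Dk K).
Proof. by apply: bigcupT_measurable => j; exact: Ev_meas. Qed.

Lemma N0_mf : measurable_fun setT (N0 a).
Proof.
move=> _ B _; rewrite setTI.
have -> : N0 a @^-1` B = (\bigcup_K (~` Dk K `&` Nk K @^-1` B)) `|`
    ((\bigcap_K Dk K) `&` [set _ | B 1%N]).
  apply/seteqP; split => w /=.
    move=> hB; case: (pselect (forall K, Dk K w)) => h.
      by right; split => //; rewrite -(allDk_N0 _ h).
    move/existsNP: h => [K hK]; left; exists K => //; split => //.
    by rewrite /= -(notDk_N0 _ _ hK).
  case => [[K _ [hK hB]]|[hD hB]]; first by rewrite (notDk_N0 _ _ hK).
  by rewrite (allDk_N0 w (fun K => hD K I)).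
apply: measurableU.
  apply: bigcupT_measurable => K; apply: measurableI; last exact: Nk_meas.
  exact/measurableC/Dk_meas.
apply: measurableI; first by apply: bigcapT_measurable => K; exact: Dk_meas.
case: (pselect (B 1%N)) => h.
  by have -> : [set _ : T | B 1%N] = setT by apply/seteqP; split.
by have -> : [set _ : T | B 1%N] = set0 by apply/seteqP; split.
Qed.

Lemma powN0_mf (y : R) : measurable_fun setT (fun w => (y ^+ N0 a w)%:E).
Proof. exact: (measurableT_comp (nat_mf (fun n => (y ^+ n)%:E)) N0_mf). Qed.

Lemma geom_partial (r : R) K n :
  (\sum_(0 <= k < n) r ^+ (K.+1 + k)) * (1 - r) = r ^+ K.+1 - r ^+ (K.+1 + n).
Proof.
elim: n => [|n IH]; first by rewrite big_geq // addn0 mul0r subrr.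
rewrite big_nat_recr //= mulrDl IH addnS (exprS r (K.+1 + n)); ring.
Qed.

Lemma PDk (r : R) : geometric_tails P r a -> 0 <= r < 1 -> forall K,
  (P (Dk K) <= (r ^+ K.+1 / (1 - r))%:E)%E.
Proof.
move=> geo /andP[r0 r1] K.
have geo' : forall K', P (Ev (em K')) = (r ^+ K'.+1)%:E.
  by move=> K'; rewrite Ev_em; exact: geo.
apply: le_trans (@measure_sigma_subadditive _ _ _ P (Dk K) (fun j => Ev (em (K + j))) (fun j => Ev_meas _) (Dk_meas K) (fun w h => h)) _.
apply: lime_le; first by apply: is_cvg_nneseries => n _ _; exact: measure_ge0.
near=> n.
rewrite (eq_bigr (fun k => (r ^+ (K + k).+1)%:E)); last by move=> k _; rewrite /= geo'.
rewrite sumEFin lee_fin ler_pdivlMr ?subr_gt0 //.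
under eq_bigr => k _ do rewrite -addSn.
rewrite geom_partial lerBlDr lerDl; exact: exprn_ge0.
Unshelve. all: by end_near.
Qed.


Lemma fK0 y K w : fK y K fset0 w = (y ^+ Nk K w)%:E.
Proof. by rewrite /fK EF0 indicE in_setT mulr1. Qed.

Lemma indicD_mf K : measurable_fun setT (fun w => (\1_(Dk K) w : R)%:E).
Proof.
apply/(measurable_EFinP _ (fun w => \1_(Dk K) w)).
exact: measurable_indic (Dk_meas K).
Qed.

Lemma indicD_ge0 K w : (0 <= (\1_(Dk K) w : R)%:E)%E.
Proof. by rewrite lee_fin indicE; case: (w \in _). Qed.

Lemma int_indicD K : (\int[P]_w (\1_(Dk K) w : R)%:E = P (Dk K))%E.
Proof.
rewrite integral_indic //; last exact: Dk_meas.
by congr (P _); apply/seteqP; split=> [x []|x] //.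
Qed.

Lemma pw_bounds y K w : 0 <= y <= 1 ->
  ((y ^+ N0 a w)%:E <= fK y K fset0 w + (\1_(Dk K) w : R)%:E)%E /\
  (fK y K fset0 w <= (y ^+ N0 a w)%:E + (\1_(Dk K) w : R)%:E)%E.
Proof.
move=> /andP[y0 y1]; rewrite fK0 -!EFinD !lee_fin.
case: (pselect (Dk K w)) => h.
  rewrite !indicE mem_set //=.
  have h1 := exprn_ile1 (N0 a w) y0 y1; have h2 := exprn_ile1 (Nk K w) y0 y1.
  have h3 := exprn_ge0 (N0 a w) y0; have h4 := exprn_ge0 (Nk K w) y0.
  split; lra.
by rewrite !indicE memNset // !addr0 (notDk_N0 _ _ h); split.
Qed.

Definition ee (r : R) K := r ^+ K.+1 / (1 - r).

Lemma GK (r y : R) : mutually_independent P a -> geometric_tails P r a ->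
  0 <= y <= 1 -> forall K, (\int[P]_w fK y K fset0 w = (Qp y r K)%:E)%E.
Proof.
move=> ind geo y01 K.
rewrite (integral_fK _ _ ind geo y01 K fset0); last by move=> n; rewrite in_fset0.
by rewrite EF0 probability_setT mule1.
Qed.

Lemma G_bounds (r y : R) : mutually_independent P a -> geometric_tails P r a ->
  0 <= r < 1 -> 0 <= y <= 1 -> forall K,
  (pgf_N0 P a y <= (Qp y r K + ee r K)%:E)%E /\
  ((Qp y r K)%:E <= pgf_N0 P a y + (ee r K)%:E)%E.
Proof.
move=> ind geo r01 y01 K.
have y0 : 0 <= y by case/andP: y01.
have mf1 := powN0_mf y.
have mf2 := fK_mf y K fset0.
have g1 : forall w, setT w -> (0 <= (y ^+ N0 a w)%:E)%E.
  by move=> w _; rewrite lee_fin exprn_ge0.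
have g2 : forall w, setT w -> (0 <= fK y K fset0 w)%E by move=> w _; exact: fK_ge0.
have g3 : forall w, setT w -> (0 <= (\1_(Dk K) w : R)%:E)%E by move=> w _; exact: indicD_ge0.
split.
  apply: (@le_trans _ _ (\int[P]_w (fK y K fset0 w + (\1_(Dk K) w : R)%:E))%E).
    apply: ge0_le_integral => //.
      by apply: emeasurable_funD => //; exact: indicD_mf.
    by move=> w _; case: (pw_bounds y K w y01).
  rewrite ge0_integralD //; last exact: indicD_mf.
  rewrite (GK _ _ ind geo y01) int_indicD EFinD; apply: leeD2l; exact: PDk geo r01 K.
rewrite -(GK _ _ ind geo y01 K).
apply: (@le_trans _ _ (\int[P]_w ((y ^+ N0 a w)%:E + (\1_(Dk K) w : R)%:E))%E).
  apply: ge0_le_integral => //.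
    by apply: emeasurable_funD => //; exact: indicD_mf.
  by move=> w _; case: (pw_bounds y K w y01).
rewrite ge0_integralD //; last exact: indicD_mf.
rewrite int_indicD; apply: leeD2l; exact: PDk geo r01 K.
Qed.

End Pf.

Lemma vanish (R : realType) (r c : R) : 0 <= r < 1 ->
  (forall K, c <= 2 * (r ^+ K.+1 / (1 - r))) -> c <= 0.
Proof.
move=> /andP[r0 r1] H.
have s0 : 0 < 1 - r by rewrite subr_gt0.
have hr : `|r| < 1 by rewrite ger0_norm.
suff : c * (1 - r) / 2 <= 0.
  by rewrite -mulrA pmulr_lle0 // divr_gt0.
have -> : (0 : R) = lim (r ^+ n @[n --> \oo]) by rewrite (cvg_lim _ (cvg_expr hr)).
apply: limr_ge; first exact: (cvgP _ (cvg_expr hr)).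
near=> n.
have h1 := ler_wpM2r (ltW s0) (H n).
have E : 2 * (r ^+ n.+1 / (1 - r)) * (1 - r) = 2 * r ^+ n.+1.
  by field; rewrite gt_eqF.
rewrite E in h1.
have h2 : r ^+ n.+1 <= r ^+ n.
  by rewrite exprS; apply: ler_piMl; [exact: exprn_ge0|exact: ltW].
lra.
Unshelve. all: by end_near.
Qed.

Theorem mainTheorem5 (R : realType) (d : measure_display) (T : measurableType d)
  (P : probability T R) (s : R) (a : int -> T -> nat) :
  0 < s <= 1 ->
  rv_family a ->
  mutually_independent P a ->
  geometric_tails P (1 - s) a ->
  forall z : R, 0 <= z <= 1 ->
    pgf_N0 P a z = (z%:E * pgf_N0 P a ((1 - s) * z + s))%E.
Proof.
move=> /andP[s0 s1] amf ind geo z /andP[z0 z1].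
set r := 1 - s.
set y := r * z + s.
have r01 : 0 <= r < 1 by rewrite /r; apply/andP; split; lra.
have z01 : 0 <= z <= 1 by rewrite z0 z1.
have y01 : 0 <= y <= 1.
  have h : 0 <= r * z by rewrite mulr_ge0 // /r; lra.
  have h' : r * z <= r by rewrite ler_piMr // /r; lra.
  have hr : r = 1 - s by []. by rewrite /y; apply/andP; split; lra.
have B := @G_bounds R d T P a amf r _ ind geo r01.
have finG : forall v, 0 <= v <= 1 -> pgf_N0 P a v \is a fin_num.
  move=> v v01; rewrite ge0_fin_numE.
    exact: le_lt_trans (proj1 (B v v01 0%N)) (ltry _).
  by apply: integral_ge0 => w _; rewrite lee_fin exprn_ge0 //; case/andP: v01.
have Bz K := B z z01 K; have By K := B y y01 K.
rewrite -(fineK (finG z z01)) -(fineK (finG y y01)) in Bz By *.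
rewrite -EFinM; congr EFin.
set gz := fine (pgf_N0 P a z); set gy := fine (pgf_N0 P a y).
have QP K : Qp R z r K.+1 = z * Qp R y r K.
  rewrite /Qp big_ord_recl; congr (z * (_ * _)).
    by rewrite /y /r expr1; ring.
  by apply: eq_bigr => i _; rewrite /= /bump /= add1n exprS /y /r; ring.
have key K : `|gz - z * gy| <= 2 * ee R r K.
  have [h1 _] := Bz K.+1; have [_ h4] := Bz K.+1.
  have [h3 _] := By K; have [_ h2] := By K.
  rewrite -EFinD lee_fin in h2; rewrite -EFinD lee_fin in h4.
  rewrite lee_fin in h1; rewrite lee_fin in h3.
  have h2' := ler_wpM2l z0 h2; have h3' := ler_wpM2l z0 h3.
  rewrite QP in h1 h4.
  have e0 : 0 <= ee R r K.
    by rewrite /ee divr_ge0 ?exprn_ge0 // ?subr_ge0; case/andP: r01 => // _ /ltW.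
  have e1 : ee R r K.+1 <= ee R r K.
    rewrite /ee exprS -mulrA; apply: ler_piMl; first by rewrite -/(ee R r K).
    by case/andP: r01 => _ /ltW.
  have e2 : z * ee R r K <= ee R r K by apply: ler_piMl.
  rewrite !mulrDr in h2' h3'.
  rewrite ler_norml; apply/andP.
  rewrite /gz /gy; split; lra.
apply/eqP; rewrite -subr_eq0 -normr_le0.
apply: (@vanish R r _ r01) => K; exact: key.
Qed.
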